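(* Let $F(s,r,\boldsymbol t,\bar{\boldsymbol t})$ satisfy the six dispersionless Hirota equations (dH1a)–(dH3b) listed in the context. Then $$\lambda\big(e^{-\partial_sD(\lambda)F}-e^{-\partial_rD(\lambda)F}\big)+\lambda^{-1}\big(e^{\partial_s(\partial_r+\partial_s+D(\lambda))F}-e^{\partial_r(\partial_r+\partial_s+D(\lambda))F}\big)=(\partial_r-\partial_s)\partial_{t_1}F,\quad\text{(dH1c)}$$ $$\lambda^{-1}\big(e^{\partial_s\bar D(\lambda)F}-e^{-\partial_r\bar D(\lambda)F}\big)+\lambda\big(e^{-\partial_s(\partial_r-\partial_s+\bar D(\lambda))F}-e^{\partial_r(\partial_r-\partial_s+\bar D(\lambda))F}\big)=(\partial_r+\partial_s)\partial_{\bar t_1}F,\quad\text{(dH2c)}$$ $$(\partial_r+\partial_s)\partial_{\bar t_1}F=e^{-\partial_r\partial_sF}(\partial_r-\partial_s)\partial_{t_1}F.\quad\text{(dH3c)}$$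
   Context: $F=F(s,r,\boldsymbol t,\bar{\boldsymbol t})$ is a smooth function of continuous variables $s,r$ and $\boldsymbol t=(t_1,t_2,\dots)$, $\bar{\boldsymbol t}=(\bar t_1,\bar t_2,\dots)$. $D(z)=\sum_{n\ge1}\frac{z^{-n}}{n}\partial_{t_n}$, $\bar D(z)=\sum_{n\ge1}\frac{z^n}{n}\partial_{\bar t_n}$; expressions like $\partial_s(\partial_r+D(\lambda))F$ denote derivatives of $F$, and identities are understood as formal series in $\lambda^{-1},\mu^{-1}$ (when $D$ appears) and $\lambda,\mu$ (when $\bar D$ appears), for parameters $\lambda\ne\mu$. The dispersionless Hirota equations are: (dH1a) $e^{D(\lambda)D(\mu)F}=\frac{\lambda e^{-\partial_rD(\lambda)F}-\mu e^{-\partial_rD(\mu)F}}{\lambda-\mu}+\frac1{\lambda\mu}e^{(\partial_s+D(\lambda))(\partial_s+D(\mu))F+\partial_r\partial_sF}$; (dH1b) $e^{D(\lambda)D(\mu)F}=\frac{\lambda e^{-\partial_sD(\lambda)F}-\mu e^{-\partial_sD(\mu)F}}{\lambda-\mu}+\frac1{\lambda\mu}e^{(\partial_r+D(\lambda))(\partial_r+D(\mu))F+\partial_r\partial_sF}$; (dH2a) $e^{\bar D(\lambda)\bar D(\mu)F}=\frac{\lambda^{-1}e^{-\partial_r\bar D(\lambda)F}-\mu^{-1}e^{-\partial_r\bar D(\mu)F}}{\lambda^{-1}-\mu^{-1}}+\lambda\mu\,e^{(-\partial_s+\bar D(\lambda))(-\partial_s+\bar D(\mu))F-\partial_r\partial_sF}$;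 (dH2b) $e^{\bar D(\lambda)\bar D(\mu)F}=\frac{\lambda^{-1}e^{\partial_s\bar D(\lambda)F}-\mu^{-1}e^{\partial_s\bar D(\mu)F}}{\lambda^{-1}-\mu^{-1}}+\lambda\mu\,e^{(\partial_r+\bar D(\lambda))(\partial_r+\bar D(\mu))F-\partial_r\partial_sF}$; (dH3a) $e^{D(\lambda)\bar D(\mu)F}=e^{-(\partial_r+\partial_s)\bar D(\mu)F}-\lambda\mu\,e^{-(\partial_rD(\lambda)+\partial_s\bar D(\mu)+\partial_r\partial_s)F}+\lambda\mu\,e^{(-\partial_s+D(\lambda))(-\partial_s+\bar D(\mu))F-(\partial_r+\partial_s)\partial_sF}$; (dH3b) $e^{D(\lambda)\bar D(\mu)F}=1-\frac{\mu}{\lambda}e^{\partial_s(\partial_s+D(\lambda)-\bar D(\mu))F}+\frac{\mu}{\lambda}e^{(\partial_r+D(\lambda))(\partial_r+\bar D(\mu))F}$. (These arise as the $\hbar\to0$ limit of the difference Fay identities for tau functions of the form $\tau(\hbar^{-1}s,\hbar^{-1}r,\hbar^{-1}\boldsymbol t,\hbar^{-1}\bar{\boldsymbol t})=e^{\hbar^{-2}F+O(\hbar^{-1})}$.) *)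

(* Defs.v *)
From Stdlib Require Import Reals ZArith List.
Open Scope R_scope.

(** * Formal power series in two variables u, v (coefficient of u^i v^j). *)
Definition pser := nat -> nat -> R.

Definition pc (c : R) : pser := fun i j =>
  match i, j with O, O => c | _, _ => 0 end.
Definition pone : pser := pc 1.
Definition padd (P Q : pser) : pser := fun i j => P i j + Q i j.
Definition pscal (c : R) (P : pser) : pser := fun i j => c * P i j.
Definition pneg (P : pser) : pser := pscal (-1) P.
Definition psub (P Q : pser) : pser := padd P (pneg Q).
Definition psum (l : list pser) : pser := fold_right padd (pc 0) l.
Definition pmul (P Q : pser) : pser := fun i j =>
  sum_f_R0 (fun a => sum_f_R0 (fun b => P a b * Q (i - a)%nat (j - b)%nat) j) i.
Fixpoint ppow (P : pser) (k : nat) : pser :=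
  match k with O => pone | S k' => pmul P (ppow P k') end.
(** exponential of a formal power series with arbitrary real constant term:
    exp (c + S) = e^c * sum_k S^k / k!  (S without constant term; the sum is
    finite coefficientwise since S^k has no monomials of total degree < k). *)
Definition pexp (P : pser) : pser := fun i j =>
  let S := fun a b => match a, b with O, O => 0 | _, _ => P a b end in
  exp (P O O) * sum_f_R0 (fun k => ppow S k i j / INR (fact k)) (i + j).

(** * Formal Laurent series u^a v^b P(u,v) (supports bounded below). *)
Record lser := LSer { lu : Z; lv : Z; lp : pser }.
Definition coef (L : lser) (i j : Z) : R :=
  if ((lu L <=? i)%Z && (lv L <=? j)%Z)%bool
  then lp L (Z.to_nat (i - lu L)) (Z.to_nat (j - lv L)) else 0.
Definition lof (P : pser) : lser := LSer 0 0 P.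
Definition mono (a b : Z) : lser := LSer a b pone.
Definition ladd (L M : lser) : lser :=
  let a := Z.min (lu L) (lu M) in let b := Z.min (lv L) (lv M) in
  LSer a b (fun i j => coef L (a + Z.of_nat i)%Z (b + Z.of_nat j)%Z
                      + coef M (a + Z.of_nat i)%Z (b + Z.of_nat j)%Z).
Definition lscal (c : R) (L : lser) : lser := LSer (lu L) (lv L) (pscal c (lp L)).
Definition lsub (L M : lser) : lser := ladd L (lscal (-1) M).
Definition lmul (L M : lser) : lser :=
  LSer (lu L + lu M) (lv L + lv M) (pmul (lp L) (lp M)).
Definition leq (L M : lser) : Prop := forall i j, coef L i j = coef M i j.
Definition is_quot (N D Q : lser) : Prop := leq (lmul D Q) N.

(** * The variables s, r, t_1, t_2, ..., tbar_1, tbar_2, ...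
    Convention: [Vt n] is t_(n+1) and [Vtb n] is tbar_(n+1). *)
Inductive var := Vs | Vr | Vt (n : nat) | Vtb (n : nat).
Record pt := Pt { ps : R; pr : R; ptt : nat -> R; pttb : nat -> R }.
Definition upd (f : nat -> R) (n : nat) (h : R) : nat -> R :=
  fun k => if Nat.eqb k n then f k + h else f k.
Definition shift (p : pt) (x : var) (h : R) : pt :=
  match x with
  | Vs => Pt (ps p + h) (pr p) (ptt p) (pttb p)
  | Vr => Pt (ps p) (pr p + h) (ptt p) (pttb p)
  | Vt n => Pt (ps p) (pr p) (upd (ptt p) n h) (pttb p)
  | Vtb n => Pt (ps p) (pr p) (ptt p) (upd (pttb p) n h)
  end.
Definition has_partial (G : pt -> R) (x : var) (p : pt) (l : R) : Prop :=
  derivable_pt_lim (fun h => G (shift p x h)) 0 l.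

(** * Series built from the second derivatives [h x y] = d_y d_x F at a point. *)
Section Ops.
Variable h : var -> var -> R.
(** coefficients of  D(z) d_x F = sum_n z^{-n}/n d_{t_n} d_x F  (V = Vt)
    or of  Dbar(z) d_x F = sum_n z^n/n d_{tbar_n} d_x F  (V = Vtb),
    as a series in the expansion variable (index n = power). *)
Definition Dco (V : nat -> var) (x : var) : nat -> R := fun n =>
  match n with O => 0 | S k => h x (V k) / INR (S k) end.
Definition su (c : nat -> R) : pser := fun i j => match j with O => c i | _ => 0 end.
Definition sv (c : nat -> R) : pser := fun i j => match i with O => c j | _ => 0 end.
Definition Du V x : pser := su (Dco V x).
Definition Dv V x : pser := sv (Dco V x).
(** D_V(u) D_W(v) F = sum_{n,m} u^n v^m/(n m) d_{V n} d_{W m} F *)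
Definition DD (V W : nat -> var) : pser := fun i j =>
  match i, j with S a, S b => h (W b) (V a) / (INR (S a) * INR (S b)) | _, _ => 0 end.
Definition Fss := h Vs Vs.
Definition Frr := h Vr Vr.
Definition Frs := h Vs Vr.
Definition Fsr := h Vr Vs.

(** (dH1a): u = lambda^{-1}, v = mu^{-1}; lambda = u^{-1}, mu = v^{-1}, 1/(lambda mu) = u v *)
Definition dH1a : Prop := exists Q,
  is_quot (lsub (lmul (mono (-1) 0) (lof (pexp (pneg (Du Vt Vr)))))
                (lmul (mono 0 (-1)) (lof (pexp (pneg (Dv Vt Vr))))))
          (lsub (mono (-1) 0) (mono 0 (-1))) Q /\
  leq (lof (pexp (DD Vt Vt)))
      (ladd Q (lmul (mono 1 1)
         (lof (pexp (psum (pc Fss :: Dv Vt Vs :: Du Vt Vs :: DD Vt Vt :: pc Frs :: nil)))))).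
Definition dH1b : Prop := exists Q,
  is_quot (lsub (lmul (mono (-1) 0) (lof (pexp (pneg (Du Vt Vs)))))
                (lmul (mono 0 (-1)) (lof (pexp (pneg (Dv Vt Vs))))))
          (lsub (mono (-1) 0) (mono 0 (-1))) Q /\
  leq (lof (pexp (DD Vt Vt)))
      (ladd Q (lmul (mono 1 1)
         (lof (pexp (psum (pc Frr :: Dv Vt Vr :: Du Vt Vr :: DD Vt Vt :: pc Frs :: nil)))))).
(** (dH2a),(dH2b): u = lambda, v = mu; lambda^{-1} = u^{-1}, lambda mu = u v *)
Definition dH2a : Prop := exists Q,
  is_quot (lsub (lmul (mono (-1) 0) (lof (pexp (pneg (Du Vtb Vr)))))
                (lmul (mono 0 (-1)) (lof (pexp (pneg (Dv Vtb Vr))))))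
          (lsub (mono (-1) 0) (mono 0 (-1))) Q /\
  leq (lof (pexp (DD Vtb Vtb)))
      (ladd Q (lmul (mono 1 1)
         (lof (pexp (psum (pc Fss :: pneg (Dv Vtb Vs) :: pneg (Du Vtb Vs)
                           :: DD Vtb Vtb :: pc (- Frs) :: nil)))))).
Definition dH2b : Prop := exists Q,
  is_quot (lsub (lmul (mono (-1) 0) (lof (pexp (Du Vtb Vs))))
                (lmul (mono 0 (-1)) (lof (pexp (Dv Vtb Vs)))))
          (lsub (mono (-1) 0) (mono 0 (-1))) Q /\
  leq (lof (pexp (DD Vtb Vtb)))
      (ladd Q (lmul (mono 1 1)
         (lof (pexp (psum (pc Frr :: Dv Vtb Vr :: Du Vtb Vr
                           :: DD Vtb Vtb :: pc (- Frs) :: nil)))))).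
(** (dH3a),(dH3b): u = lambda^{-1}, v = mu; lambda mu = u^{-1} v, mu/lambda = u v *)
Definition dH3a : Prop :=
  leq (lof (pexp (DD Vt Vtb)))
      (ladd (lsub (lof (pexp (padd (pneg (Dv Vtb Vr)) (pneg (Dv Vtb Vs)))))
                  (lmul (mono (-1) 1)
                     (lof (pexp (psum (pneg (Du Vt Vr) :: pneg (Dv Vtb Vs)
                                       :: pc (- Frs) :: nil))))))
            (lmul (mono (-1) 1)
               (lof (pexp (psum (pc Fss :: pneg (Dv Vtb Vs) :: pneg (Du Vt Vs)
                                 :: DD Vt Vtb :: pc (- Frs) :: pc (- Fss) :: nil)))))).
Definition dH3b : Prop :=
  leq (lof (pexp (DD Vt Vtb)))
      (ladd (lsub (lof pone)
                  (lmul (mono 1 1)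
                     (lof (pexp (psum (pc Fss :: Du Vt Vs :: pneg (Dv Vtb Vs) :: nil))))))
            (lmul (mono 1 1)
               (lof (pexp (psum (pc Frr :: Dv Vtb Vr :: Du Vt Vr :: DD Vt Vtb :: nil)))))).

(** (dH1c): one-variable series in u = lambda^{-1} *)
Definition dH1c : Prop :=
  leq (ladd (lmul (mono (-1) 0)
               (lsub (lof (pexp (pneg (Du Vt Vs)))) (lof (pexp (pneg (Du Vt Vr))))))
            (lmul (mono 1 0)
               (lsub (lof (pexp (psum (pc Fsr :: pc Fss :: Du Vt Vs :: nil))))
                     (lof (pexp (psum (pc Frr :: pc Frs :: Du Vt Vr :: nil)))))))
      (lof (pc (h (Vt 0) Vr - h (Vt 0) Vs))).
(** (dH2c): one-variable series in u = lambda *)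
Definition dH2c : Prop :=
  leq (ladd (lmul (mono (-1) 0)
               (lsub (lof (pexp (Du Vtb Vs))) (lof (pexp (pneg (Du Vtb Vr))))))
            (lmul (mono 1 0)
               (lsub (lof (pexp (psum (pc (- Fsr) :: pc Fss :: pneg (Du Vtb Vs) :: nil))))
                     (lof (pexp (psum (pc Frr :: pc (- Frs) :: Du Vtb Vr :: nil)))))))
      (lof (pc (h (Vtb 0) Vr + h (Vtb 0) Vs))).
Definition dH3c : Prop :=
  h (Vtb 0) Vr + h (Vtb 0) Vs = exp (- Frs) * (h (Vt 0) Vr - h (Vt 0) Vs).
End Ops.

(* Main.v *)
Require Import Defs.
From Stdlib Require Import Reals Lia Lra ZArith.
Open Scope R_scope.

Lemma sum_zero (f : nat -> R) n : (forall k, (k <= n)%nat -> f k = 0) -> sum_f_R0 f n = 0.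
Proof. induction n; intros H; simpl. apply H; lia. rewrite IHn by (intros; apply H; lia). rewrite H by lia. ring. Qed.

Lemma sum_first (f : nat -> R) n : (forall k, (1 <= k)%nat -> f k = 0) -> sum_f_R0 f n = f 0%nat.
Proof. induction n; intros H; simpl. reflexivity. rewrite IHn by auto. rewrite (H (S n)) by lia. ring. Qed.

Lemma sum_delta (x : nat -> R) m n :
  sum_f_R0 (fun k => if Nat.eqb k m then x k else 0) n = if Nat.leb m n then x m else 0.
Proof.
  induction n.
  - simpl. destruct m; simpl; auto.
  - rewrite tech5, IHn. destruct (Nat.eqb_spec (S n) m); destruct (Nat.leb_spec m n); destruct (Nat.leb_spec m (S n)); subst; try lia; ring.
Qed.

Lemma coef_lof_nat P i j : coef (lof P) (Z.of_nat i) (Z.of_nat j) = P i j.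
Proof. unfold coef, lof; simpl. rewrite !Z.sub_0_r, !Nat2Z.id.
  replace (0 <=? Z.of_nat i)%Z with true by (symmetry; apply Z.leb_le; lia).
  replace (0 <=? Z.of_nat j)%Z with true by (symmetry; apply Z.leb_le; lia). reflexivity. Qed.

Lemma coef_lof_neg P i j : (i < 0 \/ j < 0)%Z -> coef (lof P) i j = 0.
Proof. intros H. unfold coef, lof; simpl.
  destruct (Z.leb_spec 0 i); destruct (Z.leb_spec 0 j); simpl; auto; lia. Qed.

Lemma coef_below L i j : (i < lu L \/ j < lv L)%Z -> coef L i j = 0.
Proof. intros H. unfold coef.
  destruct (Z.leb_spec (lu L) i); destruct (Z.leb_spec (lv L) j); simpl; auto; lia. Qed.

Lemma coef_ladd L M i j : coef (ladd L M) i j = coef L i j + coef M i j.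
Proof.
  unfold coef at 1. unfold ladd; simpl.
  destruct (Z.leb_spec (Z.min (lu L) (lu M)) i); destruct (Z.leb_spec (Z.min (lv L) (lv M)) j); simpl.
  - rewrite !Z2Nat.id by lia.
    replace (Z.min (lu L) (lu M) + (i - Z.min (lu L) (lu M)))%Z with i by lia.
    replace (Z.min (lv L) (lv M) + (j - Z.min (lv L) (lv M)))%Z with j by lia. reflexivity.
  - rewrite !coef_below by lia. ring.
  - rewrite !coef_below by lia. ring.
  - rewrite !coef_below by lia. ring.
Qed.

Lemma coef_lscal c L i j : coef (lscal c L) i j = c * coef L i j.
Proof. unfold coef, lscal; simpl. destruct ((lu L <=? i)%Z && (lv L <=? j)%Z)%bool; unfold pscal; ring. Qed.

Lemma coef_lsub L M i j : coef (lsub L M) i j = coef L i j - coef M i j.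
Proof. unfold lsub. rewrite coef_ladd, coef_lscal. ring. Qed.

Lemma pmul_pone_l P i j : pmul pone P i j = P i j.
Proof.
  unfold pmul. rewrite sum_first.
  - rewrite sum_first. unfold pone, pc. simpl. rewrite !Nat.sub_0_r. ring.
    intros k Hk. destruct k; [lia|]. unfold pone, pc. ring.
  - intros k Hk. apply sum_zero. intros l _. destruct k; [lia|]. unfold pone, pc. ring.
Qed.

Lemma coef_mono_mul a b L i j : coef (lmul (mono a b) L) i j = coef L (i - a) (j - b).
Proof.
  unfold coef, lmul, mono; simpl.
  destruct (Z.leb_spec (a + lu L) i); destruct (Z.leb_spec (lu L) (i - a));
  destruct (Z.leb_spec (b + lv L) j); destruct (Z.leb_spec (lv L) (j - b)); simpl; try lia; auto.
  rewrite pmul_pone_l. f_equal; f_equal; lia.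
Qed.

Lemma coef_mono x y i j : coef (mono x y) i j = if (Z.eqb i x && Z.eqb j y)%bool then 1 else 0.
Proof.
  unfold coef, mono; simpl. unfold pone, pc.
  destruct (Z.leb_spec x i); destruct (Z.leb_spec y j); destruct (Z.eqb_spec i x); destruct (Z.eqb_spec j y); simpl; try lia; auto.
  - subst. rewrite !Z.sub_diag. reflexivity.
  - subst. rewrite Z.sub_diag. destruct (Z.to_nat (j - y)) eqn:E; [lia|]. destruct (Z.to_nat (x-x)); auto.
  - destruct (Z.to_nat (i - x)) eqn:E; [lia|]. auto.
  - destruct (Z.to_nat (i - x)) eqn:E; [lia|]. auto.
Qed.

Lemma sum2_delta (x : nat -> nat -> R) a0 b0 i j :
  sum_f_R0 (fun a => sum_f_R0 (fun b => if Nat.eqb a a0 then if Nat.eqb b b0 then x a b else 0 else 0) j) i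
  = if (Nat.leb a0 i && Nat.leb b0 j)%bool then x a0 b0 else 0.
Proof.
  rewrite (sum_eq _ (fun a => if Nat.eqb a a0 then (if Nat.leb b0 j then x a b0 else 0) else 0)).
  - rewrite sum_delta. destruct (Nat.leb a0 i); simpl; auto.
  - intros a _. destruct (Nat.eqb a a0).
    + apply (sum_delta (fun b => x a b)).
    + apply sum_zero; auto.
Qed.

Definition Dl : lser := lsub (mono (-1) 0) (mono 0 (-1)).

Lemma Dl_lp a b : lp Dl a b = (if Nat.eqb a 0 then if Nat.eqb b 1 then 1 else 0 else 0)
                              - (if Nat.eqb a 1 then if Nat.eqb b 0 then 1 else 0 else 0).
Proof.
  unfold Dl, lsub, ladd. cbn [lp lu lv mono lscal].
  rewrite coef_lscal, !coef_mono.
  replace (Z.min (-1) 0) with (-1)%Z by reflexivity.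
  replace (Z.min 0 (-1)) with (-1)%Z by reflexivity.
  destruct a as [|[|a]]; destruct b as [|[|b]];
  repeat match goal with |- context [Z.eqb ?x ?y] => destruct (Z.eqb_spec x y); try lia end; simpl; ring.
Qed.

Lemma pmul_Dl q i j : pmul (lp Dl) q i j =
   (if Nat.leb 1 j then q i (j-1)%nat else 0) - (if Nat.leb 1 i then q (i-1)%nat j else 0).
Proof.
  unfold pmul.
  rewrite (sum_eq _ (fun a => sum_f_R0 (fun b => if Nat.eqb a 0 then if Nat.eqb b 1 then q (i-a)%nat (j-b)%nat else 0 else 0) j
                 - sum_f_R0 (fun b => if Nat.eqb a 1 then if Nat.eqb b 0 then q (i-a)%nat (j-b)%nat else 0 else 0) j)).
  - rewrite minus_sum, !(sum2_delta (fun a b => q (i-a)%nat (j-b)%nat)).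
    rewrite Nat.sub_0_r. replace (Nat.leb 0 i) with true by reflexivity. replace (Nat.leb 0 j) with true by reflexivity.
    simpl andb. rewrite Bool.andb_true_r. rewrite Nat.sub_0_r. reflexivity.
  - intros a _. rewrite <- minus_sum. apply sum_eq. intros b _. rewrite Dl_lp.
    destruct (Nat.eqb a 0), (Nat.eqb b 1), (Nat.eqb a 1), (Nat.eqb b 0); ring.
Qed.

Lemma coef_Dl Q i j : coef (lmul Dl Q) i j = coef Q (i+1) j - coef Q i (j+1).
Proof.
  assert (HU : lu Dl = (-1)%Z) by reflexivity. assert (HV : lv Dl = (-1)%Z) by reflexivity.
  unfold coef at 1. unfold lmul. cbn [lu lv lp]. rewrite HU, HV, pmul_Dl.
  unfold coef.
  destruct (Z.leb_spec (-1 + lu Q) i); destruct (Z.leb_spec (-1 + lv Q) j);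
  destruct (Z.leb_spec (lu Q) (i+1)); destruct (Z.leb_spec (lv Q) j);
  destruct (Z.leb_spec (lu Q) i); destruct (Z.leb_spec (lv Q) (j+1)); cbn [andb]; try lia; try ring.
  all: repeat match goal with |- context [Nat.leb ?x ?y] => destruct (Nat.leb_spec x y) end; try lia; try ring.
  all: try (f_equal; f_equal; lia).


Qed.

Definition colzero (P : pser) := forall a b, (1 <= b)%nat -> P a b = 0.
Definition rowzero (P : pser) := forall a b, (1 <= a)%nat -> P a b = 0.
Definition trunc (P : pser) : pser := fun a b => match a, b with O, O => 0 | _, _ => P a b end.

Lemma pmul_colzero P Q : colzero P -> colzero Q -> colzero (pmul P Q).
Proof. intros HP HQ i j Hj. unfold pmul. apply sum_zero. intros a _. apply sum_zero. intros b Hb.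
  destruct b. rewrite (HQ _ (j - 0)%nat) by lia. ring. rewrite HP by lia. ring. Qed.
Lemma pmul_rowzero P Q : rowzero P -> rowzero Q -> rowzero (pmul P Q).
Proof. intros HP HQ i j Hi. unfold pmul. apply sum_zero. intros a Ha. apply sum_zero. intros b Hb.
  destruct a. rewrite (HQ (i - 0)%nat) by lia. ring. rewrite HP by lia. ring. Qed.
Lemma pone_colzero : colzero pone. Proof. intros a b H. destruct b; [lia|]. unfold pone, pc; destruct a; auto. Qed.
Lemma pone_rowzero : rowzero pone. Proof. intros a b H. destruct a; [lia|]. unfold pone, pc; auto. Qed.
Lemma ppow_colzero P k : colzero P -> colzero (ppow P k).
Proof. intros H; induction k; simpl. apply pone_colzero. apply pmul_colzero; auto. Qed.
Lemma ppow_rowzero P k : rowzero P -> rowzero (ppow P k).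
Proof. intros H; induction k; simpl. apply pone_rowzero. apply pmul_rowzero; auto. Qed.

Lemma pexp_colzero P : colzero P -> colzero (pexp P).
Proof. intros H i j Hj. unfold pexp. rewrite sum_zero. ring. intros k _.
  rewrite ppow_colzero; auto. unfold Rdiv; ring.
  intros a b Hb. destruct a, b; try lia; apply H; lia. Qed.
Lemma pexp_rowzero P : rowzero P -> rowzero (pexp P).
Proof. intros H i j Hj. unfold pexp. rewrite sum_zero. ring. intros k _.
  rewrite ppow_rowzero; auto. unfold Rdiv; ring.
  intros a b Hb. destruct a, b; try lia; apply H; lia. Qed.

Definition agree0 (P Q : pser) := forall a, P a 0%nat = Q a 0%nat.

Lemma pmul_agree0 P P' Q Q' : agree0 P P' -> agree0 Q Q' -> agree0 (pmul P Q) (pmul P' Q').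
Proof. intros HP HQ i. unfold pmul. apply sum_eq. intros a _. simpl. rewrite HP, HQ. reflexivity. Qed.
Lemma ppow_agree0 P P' k : agree0 P P' -> agree0 (ppow P k) (ppow P' k).
Proof. intros H; induction k; simpl. intros a; reflexivity. apply pmul_agree0; auto. Qed.
Lemma pexp_agree0 P P' : agree0 P P' -> agree0 (pexp P) (pexp P').
Proof. intros H i. unfold pexp. rewrite (H 0%nat). f_equal. apply sum_eq. intros k _.
  rewrite (ppow_agree0 _ (fun a b => match a, b with O, O => 0 | _, _ => P' a b end)). reflexivity.
  intros [|a]; simpl; auto. Qed.

Lemma pexp_00 P : pexp P 0%nat 0%nat = exp (P 0%nat 0%nat).
Proof. unfold pexp. simpl. unfold pone, pc. field. Qed.
Lemma pexp_10 P : pexp P 1%nat 0%nat = exp (P 0%nat 0%nat) * P 1%nat 0%nat.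
Proof. unfold pexp. simpl. unfold pmul, pone, pc. simpl. field. Qed.
Lemma pexp_01 P : pexp P 0%nat 1%nat = exp (P 0%nat 0%nat) * P 0%nat 1%nat.
Proof. unfold pexp. simpl. unfold pmul, pone, pc. simpl. field. Qed.

Lemma colzero_lof P i j : colzero P -> (1 <= j)%Z -> coef (lof P) i j = 0.
Proof. intros H Hj. destruct (Z_lt_le_dec i 0). apply coef_lof_neg; lia.
  replace i with (Z.of_nat (Z.to_nat i)) by lia. replace j with (Z.of_nat (Z.to_nat j)) by lia.
  rewrite coef_lof_nat. apply H. lia. Qed.
Lemma rowzero_lof P i j : rowzero P -> (1 <= i)%Z -> coef (lof P) i j = 0.
Proof. intros H Hi. destruct (Z_lt_le_dec j 0). apply coef_lof_neg; lia.
  replace i with (Z.of_nat (Z.to_nat i)) by lia. replace j with (Z.of_nat (Z.to_nat j)) by lia.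
  rewrite coef_lof_nat. apply H. lia. Qed.

Lemma key (P1 P2 E L : pser) (Q : lser) :
 colzero P1 -> rowzero P2 ->
 is_quot (lsub (lmul (mono (-1) 0) (lof (pexp P1))) (lmul (mono 0 (-1)) (lof (pexp P2))))
         (lsub (mono (-1) 0) (mono 0 (-1))) Q ->
 leq (lof L) (ladd Q (lmul (mono 1 1) (lof (pexp E)))) ->
 forall k, L (S k) 1%nat = - pexp P1 (S (S k)) 0%nat + pexp E k 0%nat.
Proof.
  intros HP1 HP2 Hq HL k.
  assert (A1 := pexp_colzero _ HP1). assert (A2 := pexp_rowzero _ HP2).
  assert (HN : forall i j, coef Q (i+1) j - coef Q i (j+1)
              = coef (lof (pexp P1)) (i+1) j - coef (lof (pexp P2)) i (j+1)).
  { intros i j. rewrite <- coef_Dl. unfold Dl. rewrite Hq. rewrite coef_lsub, !coef_mono_mul.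
    replace (i - -1)%Z with (i+1)%Z by lia. replace (j - 0)%Z with j by lia.
    replace (i - 0)%Z with i by lia. replace (j - -1)%Z with (j+1)%Z by lia. reflexivity. }
  assert (Cl : forall m i, (1 <= i)%Z -> coef Q i 0 = coef Q (i + Z.of_nat m) (- Z.of_nat m)).
  { induction m; intros i Hi.
    - simpl. rewrite Z.add_0_r. reflexivity.
    - rewrite IHm by lia. specialize (HN (i + Z.of_nat m)%Z (- Z.of_nat (S m))%Z).
      rewrite coef_lof_neg in HN by lia. rewrite rowzero_lof in HN by (auto; lia).
      replace (- Z.of_nat (S m) + 1)%Z with (- Z.of_nat m)%Z in HN by lia.
      replace (i + Z.of_nat m + 1)%Z with (i + Z.of_nat (S m))%Z in HN by lia. lra. }
  assert (Q0 : forall i, (1 <= i)%Z -> coef Q i 0 = 0).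
  { intros i Hi. rewrite (Cl (Z.to_nat (1 - lv Q)) i Hi). apply coef_below. lia. }
  specialize (HN (Z.of_nat (S k)) 0%Z). rewrite Q0 in HN by lia.
  rewrite (rowzero_lof (pexp P2)) in HN by (auto; lia).
  replace (Z.of_nat (S k) + 1)%Z with (Z.of_nat (S (S k))) in HN by lia.
  replace (0 + 1)%Z with 1%Z in HN by reflexivity.
  pose proof (coef_lof_nat (pexp P1) (S (S k)) 0) as E1. change (Z.of_nat 0) with 0%Z in E1.
  rewrite E1 in HN.
  specialize (HL (Z.of_nat (S k)) 1%Z).
  pose proof (coef_lof_nat L (S k) 1) as E2. change (Z.of_nat 1) with 1%Z in E2.
  rewrite E2, coef_ladd, coef_mono_mul in HL.
  replace (Z.of_nat (S k) - 1)%Z with (Z.of_nat k) in HL by lia.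
  pose proof (coef_lof_nat (pexp E) k 0) as E3. change (Z.of_nat 0) with (1-1)%Z in E3.
  rewrite E3 in HL. lra.
Qed.

Lemma colzero_pscal c P : colzero P -> colzero (pscal c P).
Proof. intros H a b Hb. unfold pscal. rewrite H by auto. ring. Qed.
Lemma rowzero_pscal c P : rowzero P -> rowzero (pscal c P).
Proof. intros H a b Hb. unfold pscal. rewrite H by auto. ring. Qed.
Lemma colzero_padd P Q : colzero P -> colzero Q -> colzero (padd P Q).
Proof. intros H H' a b Hb. unfold padd. rewrite H, H' by auto. ring. Qed.
Lemma colzero_su c : colzero (su c).
Proof. intros a b Hb. destruct b; [lia|]. reflexivity. Qed.
Lemma rowzero_sv c : rowzero (sv c).
Proof. intros a b Ha. destruct a; [lia|]. reflexivity. Qed.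
Lemma colzero_pc c : colzero (pc c).
Proof. intros a b Hb. destruct b; [lia|]. destruct a; reflexivity. Qed.

Ltac czero := unfold pneg, Du; cbn [psum List.fold_right];
  repeat first [apply pexp_colzero | apply colzero_padd | apply colzero_pscal | apply colzero_su | apply colzero_pc].

Lemma dH1c_of (h : var -> var -> R) (Hs : forall x y, h x y = h y x) :
  dH1a h -> dH1b h -> dH1c h.
Proof.
  intros [Qa [Hqa HLa]] [Qb [Hqb HLb]].
  assert (Ka := key _ _ _ _ _ (colzero_pscal _ _ (colzero_su _)) (rowzero_pscal _ _ (rowzero_sv _)) Hqa HLa).
  assert (Kb := key _ _ _ _ _ (colzero_pscal _ _ (colzero_su _)) (rowzero_pscal _ _ (rowzero_sv _)) Hqb HLb).
  intros i j. unfold lsub. rewrite !coef_ladd, !coef_mono_mul, !coef_ladd, !coef_lscal.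
  destruct (Z_lt_le_dec j 0).
  { rewrite !coef_lof_neg by lia. ring. }
  destruct (Z_lt_le_dec 0 j).
  { rewrite !colzero_lof by (try lia; czero). ring. }

  assert (j = 0%Z) by lia. subst j. replace (0 - 0)%Z with 0%Z by reflexivity.
  destruct (Z_lt_le_dec i (-1)).
  { rewrite !coef_lof_neg by lia. ring. }
  replace i with (Z.of_nat (Z.to_nat (i+1)) - 1)%Z by lia.
  generalize (Z.to_nat (i+1)); intros n.
  replace (Z.of_nat n - 1 - -1)%Z with (Z.of_nat n) by lia.
  change 0%Z with (Z.of_nat 0). rewrite !coef_lof_nat.
  destruct n as [|[|k]].
  - rewrite !coef_lof_neg by lia. rewrite !pexp_00. unfold pneg, pscal, Du, su, Dco. ring.
  - replace (Z.of_nat 1 - 1)%Z with (Z.of_nat 0) by reflexivity.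
    replace (Z.of_nat 1 - 1 - 1)%Z with (-1)%Z by reflexivity.
    rewrite !coef_lof_nat, !(coef_lof_neg _ (-1)%Z) by lia. rewrite !pexp_10.
    unfold pneg, pscal, Du, su, Dco, pc. replace (-1 * 0) with 0 by ring. rewrite exp_0.
    change (INR 1) with 1. rewrite (Hs Vs), (Hs Vr). field.
  - replace (Z.of_nat (S (S k)) - 1 - 1)%Z with (Z.of_nat k) by lia.
    replace (Z.of_nat (S (S k)) - 1)%Z with (Z.of_nat (S k)) by lia.
    rewrite !coef_lof_nat. specialize (Ka k). specialize (Kb k).
    rewrite (pexp_agree0 (psum (pc (Fsr h) :: pc (Fss h) :: Du h Vt Vs :: nil))
              (psum (pc (Fss h) :: Dv h Vt Vs :: Du h Vt Vs :: DD h Vt Vt :: pc (Frs h) :: nil))).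
    rewrite (pexp_agree0 (psum (pc (Frr h) :: pc (Frs h) :: Du h Vt Vr :: nil))
              (psum (pc (Frr h) :: Dv h Vt Vr :: Du h Vt Vr :: DD h Vt Vt :: pc (Frs h) :: nil))).
    unfold pneg, Du in *. change (pc _ (S k) 0%nat) with 0. lra.
    + intros [|a]; unfold psum, List.fold_right, padd, pc, Dv, Du, sv, su, DD, Dco; ring.
    + intros [|a]; unfold psum, List.fold_right, padd, pc, Dv, Du, sv, su, DD, Dco, Fsr, Frs; rewrite ?(Hs Vr Vs); ring.
Qed.

Ltac rzero := unfold pneg, Dv; cbn [psum List.fold_right];
  repeat first [apply rowzero_pscal | apply rowzero_sv].

Lemma dH2c_of (h : var -> var -> R) (Hs : forall x y, h x y = h y x) :
  dH2a h -> dH2b h -> dH2c h.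
Proof.
  intros [Qa [Hqa HLa]] [Qb [Hqb HLb]].
  assert (Ka := fun c r => key _ _ _ _ _ c r Hqa HLa).
  assert (Kb := fun c r => key _ _ _ _ _ c r Hqb HLb).
  specialize (Ka ltac:(czero) ltac:(rzero)). specialize (Kb ltac:(czero) ltac:(rzero)).
  intros i j. unfold lsub. rewrite !coef_ladd, !coef_mono_mul, !coef_ladd, !coef_lscal.
  destruct (Z_lt_le_dec j 0).
  { rewrite !coef_lof_neg by lia. ring. }
  destruct (Z_lt_le_dec 0 j).
  { rewrite !colzero_lof by (try lia; czero). ring. }
  assert (j = 0%Z) by lia. subst j. replace (0 - 0)%Z with 0%Z by reflexivity.
  destruct (Z_lt_le_dec i (-1)).
  { rewrite !coef_lof_neg by lia. ring. }
  replace i with (Z.of_nat (Z.to_nat (i+1)) - 1)%Z by lia.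
  generalize (Z.to_nat (i+1)); intros n.
  replace (Z.of_nat n - 1 - -1)%Z with (Z.of_nat n) by lia.
  change 0%Z with (Z.of_nat 0). rewrite !coef_lof_nat.
  destruct n as [|[|k]].
  - rewrite !coef_lof_neg by lia. rewrite !pexp_00. unfold pneg, pscal, Du, su, Dco. rewrite Rmult_0_r. ring.
  - replace (Z.of_nat 1 - 1)%Z with (Z.of_nat 0) by reflexivity.
    replace (Z.of_nat 1 - 1 - 1)%Z with (-1)%Z by reflexivity.
    rewrite !coef_lof_nat, !(coef_lof_neg _ (-1)%Z) by lia. rewrite !pexp_10.
    unfold pneg, pscal, Du, su, Dco, pc. rewrite Rmult_0_r, exp_0.
    change (INR 1) with 1. rewrite (Hs Vs), (Hs Vr). field.
  - replace (Z.of_nat (S (S k)) - 1 - 1)%Z with (Z.of_nat k) by lia.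
    replace (Z.of_nat (S (S k)) - 1)%Z with (Z.of_nat (S k)) by lia.
    rewrite !coef_lof_nat. specialize (Ka k). specialize (Kb k).
    rewrite (pexp_agree0 (psum (pc (- Fsr h) :: pc (Fss h) :: pneg (Du h Vtb Vs) :: nil))
              (psum (pc (Fss h) :: pneg (Dv h Vtb Vs) :: pneg (Du h Vtb Vs)
                           :: DD h Vtb Vtb :: pc (- Frs h) :: nil))).
    rewrite (pexp_agree0 (psum (pc (Frr h) :: pc (- Frs h) :: Du h Vtb Vr :: nil))
              (psum (pc (Frr h) :: Dv h Vtb Vr :: Du h Vtb Vr :: DD h Vtb Vtb :: pc (- Frs h) :: nil))).
    unfold pneg, Du in *. change (pc _ (S k) 0%nat) with 0. lra.
    + intros [|a]; unfold psum, List.fold_right, padd, pc, Dv, Du, sv, su, DD, Dco; ring.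
    + intros [|a]; unfold psum, List.fold_right, padd, pc, pneg, pscal, Dv, Du, sv, su, DD, Dco, Fsr, Frs; rewrite ?(Hs Vr Vs); ring.
Qed.


Lemma coef_lof_01 P : coef (lof P) 0 1 = P 0%nat 1%nat.
Proof. exact (coef_lof_nat P 0 1). Qed.

Lemma dH3c_of (h : var -> var -> R) (Hs : forall x y, h x y = h y x) :
  dH3a h -> dH3c h.
Proof.
  intros H. specialize (H 0%Z 1%Z). unfold lsub in H.
  rewrite !coef_ladd, !coef_lscal, !coef_mono_mul in H.
  replace (0 - -1)%Z with (Z.of_nat 1) in H by reflexivity.
  replace (1 - 1)%Z with (Z.of_nat 0) in H by reflexivity.
  rewrite !coef_lof_nat, !coef_lof_01, !pexp_01, !pexp_10 in H.
  unfold psum, List.fold_right, padd, pc, pneg, pscal, Dv, Du, sv, su, DD, Dco in H.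
  change (INR 1) with 1 in H. unfold dH3c.
  replace (-1 * 0 + -1 * 0) with 0 in H by ring.
  replace (-1 * 0 + (-1 * 0 + (- Frs h + 0))) with (- Frs h) in H by ring.
  replace (Fss h + (-1 * 0 + (-1 * 0 + (0 + (- Frs h + (- Fss h + 0)))))) with (- Frs h) in H by ring.
  rewrite exp_0 in H. rewrite (Hs (Vtb 0)), (Hs (Vtb 0)), (Hs (Vt 0)), (Hs (Vt 0)).
  unfold Rdiv in H. rewrite Rinv_1 in H. lra.
Qed.

Theorem theorem6
  (F : pt -> R) (F1 : var -> pt -> R) (F2 : var -> var -> pt -> R)
  (HF1 : forall x p, has_partial F x p (F1 x p))
  (HF2 : forall x y p, has_partial (F1 x) y p (F2 x y p))
  (Hsym : forall x y p, F2 x y p = F2 y x p)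
  (H1a : forall p, dH1a (fun x y => F2 x y p))
  (H1b : forall p, dH1b (fun x y => F2 x y p))
  (H2a : forall p, dH2a (fun x y => F2 x y p))
  (H2b : forall p, dH2b (fun x y => F2 x y p))
  (H3a : forall p, dH3a (fun x y => F2 x y p))
  (H3b : forall p, dH3b (fun x y => F2 x y p)) :
  forall p, dH1c (fun x y => F2 x y p) /\ dH2c (fun x y => F2 x y p)
            /\ dH3c (fun x y => F2 x y p).
Proof.
  intros p. assert (Hs : forall x y, (fun x y => F2 x y p) x y = (fun x y => F2 x y p) y x)
    by (intros; apply Hsym).
  split; [|split].
  - apply dH1c_of; auto.
  - apply dH2c_of; auto.
  - apply dH3c_of; auto.
Qed.
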